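(* Let $G$ be a finite connected multigraph and let $H$ be a connected subgraph of $G$. Then $$\tau(H)\,\tau(G/\!/H)\le \tau(G).$$
   Context: For a finite connected multigraph $K$, $\tau(K)$ denotes the number of spanning trees of $K$, where a spanning tree is a subgraph of $K$ that is maximal among subgraphs without cycles. For a subgraph $H$ of $G$, $G/\!/H$ denotes the multigraph obtained from $G$ by contracting all edges of $H$ (edges of $G$ not in $H$ whose endpoints both lie in $V(H)$ become loops). *)

(* Defs.v *)
From mathcomp Require Import all_boot.
Set Implicit Arguments. Unset Strict Implicit. Unset Printing Implicit Defensive.

(* A finite multigraph is given inside ambient finite types V (vertices) and
   E (edges) with an endpoint map ends : E -> V * V (loops and parallel edges
   allowed), by a vertex set VS : {set V} and an edge set ES : {set E}. *)

Section Multigraph.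
Variables (V E : finType) (ends : E -> V * V).

Definition adj (T : {set E}) : rel V :=
  fun u v => [exists e in T, (ends e == (u, v)) || (ends e == (v, u))].

Definition wf_graph (VS : {set V}) (ES : {set E}) : Prop :=
  forall e, e \in ES -> (ends e).1 \in VS /\ (ends e).2 \in VS.

Definition connected_graph (VS : {set V}) (ES : {set E}) : Prop :=
  VS != set0 /\ {in VS &, forall u v, connect (adj ES) u v}.

Definition subgraph (VH : {set V}) (EH : {set E}) (VG : {set V}) (EG : {set E}) : Prop :=
  [/\ VH \subset VG, EH \subset EG & wf_graph VH EH].

Definition acyclic (T : {set E}) : bool :=
  [forall e in T, ~~ connect (adj (T :\ e)) (ends e).1 (ends e).2].

(* spanning tree of (VS, ES): a maximal cycle-free subgraph; maximality forces
   all vertices to be included, so it is determined by its edge set, which is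
   a maximal acyclic subset of ES. *)
Definition spanning_tree (ES T : {set E}) : bool :=
  [&& T \subset ES, acyclic T & [forall e in ES :\: T, ~~ acyclic (e |: T)]].

Definition tau (ES : {set E}) : nat := #|[set T : {set E} | spanning_tree ES T]|.

End Multigraph.

(* Contraction G//H : vertices of H are merged into the new vertex None, other
   vertices v become Some v; edges are those of G not in H (edges with both
   endpoints in V(H) become loops at None). *)
Definition contr_map (V : finType) (VH : {set V}) (v : V) : option V :=
  if v \in VH then None else Some v.

Definition contr_ends (V E : finType) (ends : E -> V * V) (VH : {set V})
  (e : E) : option V * option V :=
  (contr_map VH (ends e).1, contr_map VH (ends e).2).

Definition contr_verts (V : finType) (VG VH : {set V}) : {set option V} :=
  None |: [set Some v | v in VG :\: VH].

Definition contr_edges (E : finType) (EG EH : {set E}) : {set E} := EG :\: EH.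

(* Main.v *)
Require Import Defs.
From mathcomp Require Import all_boot.
Set Implicit Arguments. Unset Strict Implicit. Unset Printing Implicit Defensive.

Lemma connect_map (T T' : finType) (e : rel T) (e' : rel T') (h : T -> T') :
  (forall x y, e x y -> connect e' (h x) (h y)) ->
  forall x y, connect e x y -> connect e' (h x) (h y).
Proof.
move=> st x y /connectP[p]; elim: p x => [|z p IH] x /=; first by move=> _ ->.
by case/andP=> exz pz ly; apply: connect_trans (st _ _ exz) (IH _ pz ly).
Qed.

Section Aux.
Variables (V E : finType) (ends : E -> V * V).
Local Notation adj := (adj ends).
Local Notation acyclic := (acyclic ends).

Lemma adj_sym (S : {set E}) : symmetric (adj S).
Proof.
by move=> u v; apply/existsP/existsP => -[f /andP[fS h]]; exists f; rewrite fS /= orbC.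
Qed.

Lemma csym (S : {set E}) : connect_sym (adj S).
Proof. exact: sym_connect_sym (adj_sym S). Qed.

Lemma adjP (S : {set E}) u v : adj S u v -> exists2 f, f \in S & (ends f = (u,v) \/ ends f = (v,u)).
Proof.
by case/existsP=> f /andP[fS /orP[]/eqP h]; exists f => //; [left|right].
Qed.

Lemma adj_edge (S : {set E}) f : f \in S -> adj S (ends f).1 (ends f).2.
Proof. by move=> fS; apply/existsP; exists f; rewrite fS -surjective_pairing eqxx. Qed.

Lemma conn_edge (S : {set E}) f : f \in S -> connect (adj S) (ends f).1 (ends f).2.
Proof. by move=> fS; apply: connect1; apply: adj_edge. Qed.

Lemma conn_mono (S S' : {set E}) u v : S \subset S' -> connect (adj S) u v -> connect (adj S') u v.
Proof.
move=> sub; apply: connect_sub => x y /existsP[f /andP[fS h]]; apply: connect1.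
by apply/existsP; exists f; rewrite (subsetP sub _ fS) h.
Qed.

Lemma add_edge_conn (S : {set E}) e u v : connect (adj (e |: S)) u v ->
  [\/ connect (adj S) u v,
      connect (adj S) u (ends e).1 /\ connect (adj S) (ends e).2 v |
      connect (adj S) u (ends e).2 /\ connect (adj S) (ends e).1 v].
Proof.
move/connectP=> [p]; elim: p u => [|y p IH] u /=.
  by move=> _ ->; apply: Or31; apply: connect0.
case/andP=> /adjP[g gS hg] pth lst; have := IH y pth lst.
set c := connect (adj S).
move: gS; rewrite in_setU1 => /orP[/eqP Eg | gS].
  rewrite Eg in hg; case: hg => -> /=.
    case=> [h|[h1 h2]|[h1 h2]].
    - by apply: Or32; split=> //; apply: connect0.
    - by apply: Or32; split=> //; apply: connect0.
    - by apply: Or31.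
  case=> [h|[h1 h2]|[h1 h2]].
  - by apply: Or33; split=> //; apply: connect0.
  - by apply: Or31.
  - by apply: Or33; split=> //; apply: connect0.
have cuy : c u y.
  apply: connect1; have := adj_edge gS; case: hg => -> //=; by rewrite adj_sym.
case=> [h|[h1 h2]|[h1 h2]].
- by apply: Or31; apply: connect_trans cuy h.
- by apply: Or32; split=> //; apply: connect_trans cuy h1.
- by apply: Or33; split=> //; apply: connect_trans cuy h1.
Qed.

Lemma acyclic_add (F : {set E}) e : acyclic F -> e \notin F ->
  ~~ connect (adj F) (ends e).1 (ends e).2 -> acyclic (e |: F).
Proof.
move=> aF eF nc; apply/forall_inP => f; rewrite in_setU1 => /orP[/eqP->|fF].
  by rewrite setU1K.
have fe : f != e by apply: contraNneq eF => <-.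
have -> : (e |: F) :\ f = e |: (F :\ f).
  apply/setP=> x; rewrite !inE; case: eqP => // ->; by rewrite (negPf fe).
have := forall_inP aF f fF; apply: contra => /add_edge_conn.
have sub : F :\ f \subset F by apply: subsetDl.
case=> [//|[h1 h2]|[h1 h2]]; exfalso; move/negP: nc; apply.
- apply: (connect_trans (connect_trans _ (conn_edge fF))).
  + rewrite csym; exact: conn_mono sub h1.
  + rewrite csym; exact: conn_mono sub h2.
- have ef : connect (adj F) (ends f).2 (ends f).1 by rewrite csym conn_edge.
  apply: (connect_trans (connect_trans _ ef)).
  + exact: conn_mono sub h2.
  + exact: conn_mono sub h1.
Qed.

Lemma st_conn (ES F : {set E}) e : spanning_tree ends ES F -> e \in ES ->
  connect (adj F) (ends e).1 (ends e).2.
Proof.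
case/and3P=> sub aF /forall_inP mx eS.
case: (boolP (e \in F)) => eF; first exact: conn_edge.
apply/negPn/negP => nc; have := mx e; rewrite in_setD eF eS => /(_ isT).
by rewrite (acyclic_add aF eF nc).
Qed.

End Aux.

Section Main.
Variables (V E : finType) (ends : E -> V * V) (VG : {set V}) (EG : {set E})
  (VH : {set V}) (EH : {set E}).
Hypothesis wfH : wf_graph ends VH EH.
Hypothesis conH : connected_graph ends VH EH.
Local Notation c := (contr_map VH).
Local Notation cends := (contr_ends ends VH).

Lemma VH_conn T1 : spanning_tree ends EH T1 ->
  {in VH &, forall u v, connect (adj ends T1) u v}.
Proof.
move=> st u v uH vH; have := conH.2 u v uH vH; apply: connect_sub => x y.
case/adjP=> f fE [] h; have := st_conn st fE; rewrite h //= => H.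
by rewrite csym.
Qed.

Lemma cmap_eq a b : c a = c b -> a = b \/ (a \in VH /\ b \in VH).
Proof.
rewrite /contr_map; case: ifP => ha; case: ifP => hb //; first by right.
by case=> ->; left.
Qed.

Lemma proj_conn (T1 S : {set E}) u v : T1 \subset EH ->
  connect (adj ends (T1 :|: S)) u v -> connect (adj cends S) (c u) (c v).
Proof.
move=> sub; apply: connect_map => x y /adjP[f]; rewrite in_setU => /orP[fT|fS] h.
  have [h1 h2] := wfH (subsetP sub _ fT).
  by case: h h1 h2 => -> /= x1 y1; rewrite /contr_map x1 y1 connect0.
apply: connect1; have := adj_edge cends fS; rewrite /contr_ends.
by case: h => -> //=; rewrite adj_sym.
Qed.

Lemma lift_conn (T1 T2 : {set E}) x y : spanning_tree ends EH T1 ->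
  connect (adj cends T2) x y -> forall u v, c u = x -> c v = y ->
  connect (adj ends (T1 :|: T2)) u v.
Proof.
move=> st.
have ceq a b : c a = c b -> connect (adj ends (T1 :|: T2)) a b.
  case/cmap_eq => [->|[ha hb]]; first exact: connect0.
  apply: conn_mono (subsetUl _ _) _; exact: VH_conn.
move/connectP=> [p]; elim: p x => [|z p IH] x /=.
  by move=> _ -> u v <- cv; apply: ceq.
case/andP=> /adjP[f fT h] pz ly u v cu cv.
have eT : connect (adj ends (T1 :|: T2)) (ends f).1 (ends f).2.
  by apply: conn_edge; rewrite in_setU fT orbT.
move: h; rewrite /contr_ends => -[] [] h1 h2.
- apply: connect_trans (IH _ pz ly _ _ h2 cv).
  by apply: connect_trans eT; apply: ceq; rewrite h1.
- rewrite csym in eT.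
  apply: connect_trans (IH _ pz ly _ _ h1 cv).
  by apply: connect_trans eT; apply: ceq; rewrite h2.
Qed.

Lemma union_st (T1 T2 : {set E}) : EH \subset EG ->
  spanning_tree ends EH T1 -> spanning_tree cends (contr_edges EG EH) T2 ->
  spanning_tree ends EG (T1 :|: T2).
Proof.
move=> sHG st1 st2.
have st1' := st1; have st2' := st2.
case/and3P: st1' => s1 a1 m1; case/and3P: st2' => s2 a2 m2.
have s2G : T2 \subset EG by apply: subset_trans s2 (subsetDl _ _).
apply/and3P; split.
- by rewrite subUset s2G (subset_trans s1 sHG).
- suff H : forall n (S : {set E}), S \subset T2 -> #|S| = n -> acyclic ends (T1 :|: S).
    exact: (H _ T2 (subxx _) erefl).
  elim=> [|n IH] S sS cS.
    by move/eqP: cS; rewrite cards_eq0 => /eqP->; rewrite setU0.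
  have [f fS] : exists f, f \in S.
    by apply/set0Pn; rewrite -card_gt0 cS.
  have fT2 := subsetP sS _ fS.
  have Sdef : T1 :|: S = f |: (T1 :|: (S :\ f)).
    by rewrite setUCA (setD1K fS).
  rewrite Sdef; apply: acyclic_add.
  + apply: IH; first by apply: subset_trans (subsetDl _ _) sS.
    by move: cS; rewrite (cardsD1 f) fS add1n => -[].
  + rewrite in_setU in_setD1 eqxx /= orbF.
    by have := subsetP s2 _ fT2; rewrite /contr_edges in_setD; apply: contraTN => /(subsetP s1) ->.
  + apply/negP => hc0; have hc := proj_conn s1 hc0.
    move/forall_inP: a2 => /(_ f fT2); apply/negPn.
    rewrite negbK; apply: conn_mono hc; apply: setSD; exact: sS.
- apply/forall_inP => e; rewrite in_setD in_setU negb_or => /andP[/andP[eT1 eT2] eG].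
  rewrite /acyclic; apply/forall_inPn; exists e; first by rewrite setU11.
  rewrite negbK setU1K ?in_setU ?negb_or ?eT1 //.
  case: (boolP (e \in EH)) => eH.
    by apply: conn_mono (subsetUl _ _) (st_conn st1 eH).
  have eC : e \in contr_edges EG EH by rewrite /contr_edges in_setD eH eG.
  exact: lift_conn st1 (st_conn st2 eC) _ _ erefl erefl.
Qed.

End Main.

Lemma split_eq (E : finType) (EG EH T1 T2 : {set E}) :
  T1 \subset EH -> T2 \subset EG :\: EH ->
  (T1 :|: T2) :&: EH = T1 /\ (T1 :|: T2) :\: EH = T2.
Proof.
move=> s1 s2; have h1 := subsetP s1.
have h2 x : x \in T2 -> x \notin EH by move/(subsetP s2); rewrite inE => /andP[].
split; apply/setP=> x; rewrite !inE;
  case: (boolP (x \in T1)) => a; case: (boolP (x \in T2)) => b;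
  case: (boolP (x \in EH)) => c //=;
  try (by move: (h1 _ a); rewrite (negPf c)); by move: (h2 _ b); rewrite c.
Qed.

Theorem lemma3p1 (V E : finType) (ends : E -> V * V)
  (VG : {set V}) (EG : {set E}) (VH : {set V}) (EH : {set E}) :
  wf_graph ends VG EG ->
  connected_graph ends VG EG ->
  subgraph ends VH EH VG EG ->
  connected_graph ends VH EH ->
  tau ends EH * tau (contr_ends ends VH) (contr_edges EG EH) <= tau ends EG.
Proof.
move=> _ _ [sV sE wf] conn.
rewrite /tau -cardsX.
set A := setX _ _.
have sub12 p : p \in A -> p.1 \subset EH /\ p.2 \subset EG :\: EH.
  by rewrite /A !inE => /andP[/and3P[-> _ _] /and3P[-> _ _]].
have inj : {in A &, injective (fun p : {set E} * {set E} => p.1 :|: p.2)}.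
  move=> [p1' p2'] [q1' q2'] /sub12[p1 p2] /sub12[q1 q2] /= eq.
  have [a1 a2] := split_eq p1 p2; have [b1 b2] := split_eq q1 q2.
  by simpl in *; congr pair; [rewrite -a1 -b1 eq | rewrite -a2 -b2 eq].
rewrite -(card_in_imset inj); apply: subset_leq_card.
apply/subsetP=> T /imsetP[p pA ->]; rewrite inE.
move: pA; rewrite /A !inE => /andP[st1 st2].
exact: (union_st wf conn sE st1 st2).
Qed.
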